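(* Let $\mathcal{T}=(C,B,A)$ and $\mathcal{T}'=(C',B',A')$ be $m\times(n,m,m)$ triples, and define the $m\times(n+2m)$ polynomial matrices $\mathcal{T}(x,y)=[C\ \ xI_m+B\ \ yI_m+A]$ and $\mathcal{T}'(x,y)=[C'\ \ xI_m+B'\ \ yI_m+A']$ in indeterminates $x,y$. Then $\mathcal{T}$ and $\mathcal{T}'$ are feedback similar if and only if there exist nonsingular complex matrices $S\in\mathbb{C}^{m\times m}$ and $R\in\mathbb{C}^{(n+2m)\times(n+2m)}$ such that $S\,\mathcal{T}'(x,y)=\mathcal{T}(x,y)\,R$.
   Context: An $m\times(n,m,m)$ triple is $(C,B,A)$ with $C\in\mathbb{C}^{m\times n}$, $B,A\in\mathbb{C}^{m\times m}$. Two such triples are feedback similar if $[C'\ B'\ A']=S^{-1}[C\ B\ A]\begin{bmatrix}P&V&U\\0&S&0\\0&0&S\end{bmatrix}$ for some $U,V\in\mathbb{C}^{n\times m}$ and nonsingular $P\in\mathbb{C}^{n\times n}$, $S\in\mathbb{C}^{m\times m}$. *)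

(* Defs.v *)
From HB Require Import structures.
From mathcomp Require Import all_boot all_order all_algebra.
From mathcomp Require Import complex.
From mathcomp Require Import Rstruct.
From Stdlib Require Import Reals.

Set Implicit Arguments.
Unset Strict Implicit.
Unset Printing Implicit Defensive.

Import Order.TTheory GRing.Theory Num.Theory.
Local Open Scope ring_scope.

Notation CC := (complex R).

Definition trip_mx (m n : nat) (C : 'M[CC]_(m, n)) (B A : 'M[CC]_m)
  : 'M[CC]_(m, n + (m + m)) := row_mx C (row_mx B A).

Definition fb_block (m n : nat) (P : 'M[CC]_n) (V U : 'M[CC]_(n, m))
  (S : 'M[CC]_m) : 'M[CC]_(n + (m + m)) :=
  block_mx P (row_mx V U) 0 (block_mx S 0 0 S).

Definition feedback_similar (m n : nat) (C : 'M[CC]_(m, n)) (B A : 'M[CC]_m)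
  (C' : 'M[CC]_(m, n)) (B' A' : 'M[CC]_m) : Prop :=
  exists (U V : 'M[CC]_(n, m)) (P : 'M[CC]_n) (S : 'M[CC]_m),
    [/\ P \in unitmx, S \in unitmx &
        trip_mx C' B' A' = invmx S *m trip_mx C B A *m fb_block P V U S].

(* Polynomials in two indeterminates x, y: {poly {poly CC}}, where the
   outer variable 'X is y and the inner variable ('X)%:P is x. *)
Definition cst2 (c : CC) : {poly {poly CC}} := (c%:P)%:P.
Definition var_x : {poly {poly CC}} := ('X)%:P.
Definition var_y : {poly {poly CC}} := 'X.

Definition trip_poly (m n : nat) (C : 'M[CC]_(m, n)) (B A : 'M[CC]_m)
  : 'M[{poly {poly CC}}]_(m, n + (m + m)) :=
  row_mx (map_mx cst2 C)
    (row_mx (var_x%:M + map_mx cst2 B) (var_y%:M + map_mx cst2 A)).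

(* Main.v *)
Require Import Defs.
From mathcomp Require Import all_boot all_order all_algebra.
From mathcomp Require Import complex Rstruct.
From Stdlib Require Import Reals.
Import GRing.Theory.
Local Open Scope ring_scope.

Lemma coef3 (u0 u1 u2 v0 v1 v2 : CC) :
  cst2 u0 + var_x * cst2 u1 + var_y * cst2 u2 =
  cst2 v0 + var_x * cst2 v1 + var_y * cst2 v2 -> [/\ u0 = v0, u1 = v1 & u2 = v2].
Proof.
rewrite /cst2 /var_x /var_y -!polyCM => E.
have E0 := congr1 (fun p : {poly {poly CC}} => (p`_0)`_0) E.
have E1 := congr1 (fun p : {poly {poly CC}} => (p`_0)`_1) E.
have E2 := congr1 (fun p : {poly {poly CC}} => (p`_1)`_0) E.
cbv beta in E0, E1, E2.
move: E0 E1 E2; rewrite !(coefD, coefC, coefXM) /=.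
by rewrite !addr0 !add0r => -> -> ->.
Qed.

Lemma cst2_0 : cst2 0 = 0.
Proof. by rewrite /cst2 !polyC0. Qed.

Lemma cst2_1 : cst2 1 = 1.
Proof. by rewrite /cst2 !polyC1. Qed.

Lemma map_cst2 (p q : nat) (M : 'M[CC]_(p, q)) :
  map_mx cst2 M = map_mx polyC (map_mx polyC M).
Proof. by apply/matrixP => i j; rewrite !mxE. Qed.

Lemma cst2_mulmx (p q r : nat) (M : 'M[CC]_(p, q)) (N : 'M[CC]_(q, r)) :
  map_mx cst2 (M *m N) = map_mx cst2 M *m map_mx cst2 N.
Proof. by rewrite !map_cst2 !map_mxM. Qed.

Definition E2 (m n : nat) : 'M[CC]_(m, n + (m + m)) := trip_mx 0 1%:M 0.
Definition E3 (m n : nat) : 'M[CC]_(m, n + (m + m)) := trip_mx 0 0 1%:M.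

Lemma trip_dec (m n : nat) (C : 'M[CC]_(m, n)) (B A : 'M[CC]_m) :
  trip_poly C B A = map_mx cst2 (trip_mx C B A)
    + var_x *: map_mx cst2 (E2 m n) + var_y *: map_mx cst2 (E3 m n).
Proof.
apply/matrixP => i j; rewrite /trip_poly /E2 /E3 /trip_mx !mxE.
case: (fintype.split j) => k; rewrite !mxE ?cst2_0 ?mulr0 ?addr0 //.
case: (fintype.split k) => l; rewrite !mxE ?cst2_0 ?mulr0 ?addr0 ?add0r.
  by case: eqP; rewrite ?cst2_1 ?cst2_0 ?mulr1 ?mulr0 ?mulr1n ?mulr0n addrC.
by case: eqP; rewrite ?cst2_1 ?cst2_0 ?mulr1 ?mulr0 ?mulr1n ?mulr0n addrC.
Qed.

Lemma dec_eq (m p : nat) (M0 M1 M2 N0 N1 N2 : 'M[CC]_(m, p)) :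
  map_mx cst2 M0 + var_x *: map_mx cst2 M1 + var_y *: map_mx cst2 M2 =
  map_mx cst2 N0 + var_x *: map_mx cst2 N1 + var_y *: map_mx cst2 N2 <->
  [/\ M0 = N0, M1 = N1 & M2 = N2].
Proof.
split; last by case=> -> -> ->.
move=> E.
have H : forall i j, [/\ M0 i j = N0 i j, M1 i j = N1 i j & M2 i j = N2 i j].
  move=> i j; apply: coef3.
  by have := congr1 (fun M : 'M_(m, p) => M i j) E; rewrite /= !mxE.
by split; apply/matrixP => i j; case: (H i j).
Qed.

Lemma key (m n : nat) (C : 'M[CC]_(m, n)) (B A : 'M[CC]_m)
  (C' : 'M[CC]_(m, n)) (B' A' : 'M[CC]_m) (S : 'M[CC]_m)
  (R : 'M[CC]_(n + (m + m))) :
  map_mx cst2 S *m trip_poly C' B' A' = trip_poly C B A *m map_mx cst2 R <->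
  [/\ S *m trip_mx C' B' A' = trip_mx C B A *m R,
      S *m E2 m n = E2 m n *m R & S *m E3 m n = E3 m n *m R].
Proof.
rewrite !trip_dec mulmxDr mulmxDr mulmxDl mulmxDl.
rewrite -!scalemxAr -!scalemxAl -!cst2_mulmx.
exact: dec_eq.
Qed.

Lemma E2_mul (m n : nat) (R : 'M[CC]_(n + (m + m))) :
  E2 m n *m R = usubmx (dsubmx R).
Proof.
rewrite -{1}(vsubmxK R) -{1}(vsubmxK (dsubmx R)) /E2 /trip_mx.
by rewrite !mul_row_col (mul0mx _ (usubmx R)) (mul0mx _ (dsubmx (dsubmx R))) add0r mul1mx addr0.
Qed.

Lemma E3_mul (m n : nat) (R : 'M[CC]_(n + (m + m))) :
  E3 m n *m R = dsubmx (dsubmx R).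
Proof.
rewrite -{1}(vsubmxK R) -{1}(vsubmxK (dsubmx R)) /E3 /trip_mx.
by rewrite !mul_row_col (mul0mx _ (usubmx R)) (mul0mx _ (usubmx (dsubmx R))) add0r mul1mx add0r.
Qed.

Lemma fb_unit (m n : nat) (P : 'M[CC]_n) (V U : 'M[CC]_(n, m)) (S : 'M[CC]_m) :
  (fb_block P V U S \in unitmx) = (P \in unitmx) && (S \in unitmx).
Proof.
rewrite !unitmxE /fb_block det_ublock det_ublock !unitrM.
by case: (\det P \is a GRing.unit); case: (\det S \is a GRing.unit).
Qed.

Lemma rc (m1 m2 n p : nat) (X : 'M[CC]_(m1, p)) (Y : 'M[CC]_(m2, p)) :
  row_mx (0 : 'M[CC]_(m1 + m2, n)) (col_mx X Y) = col_mx (row_mx 0 X) (row_mx 0 Y).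
Proof. by rewrite -[RHS]/(block_mx _ _ _ _) block_mxEh col_mx0. Qed.

Lemma fb_rows (m n : nat) (P : 'M[CC]_n) (V U : 'M[CC]_(n, m)) (S : 'M[CC]_m) :
  dsubmx (fb_block P V U S) = col_mx (row_mx 0 (row_mx S 0)) (row_mx 0 (row_mx 0 S)).
Proof. by rewrite /fb_block /block_mx col_mxKd rc. Qed.

Theorem lemma12 (m n : nat) (C : 'M[CC]_(m, n)) (B A : 'M[CC]_m)
  (C' : 'M[CC]_(m, n)) (B' A' : 'M[CC]_m) :
  feedback_similar C B A C' B' A' <->
  exists (S : 'M[CC]_m) (R : 'M[CC]_(n + (m + m))),
    [/\ S \in unitmx, R \in unitmx &
        map_mx cst2 S *m trip_poly C' B' A' = trip_poly C B A *m map_mx cst2 R].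
Proof.
split.
  case=> U [V [P [S [uP uS E]]]].
  exists S, (fb_block P V U S); split.
  - exact: uS.
  - by rewrite fb_unit uP uS.
  apply/key; split.
  - by rewrite E !mulmxA mulmxV // mul1mx.
  - rewrite E2_mul /fb_block /E2 /trip_mx !mul_mx_row !mulmx0 mulmx1.
    by rewrite fb_rows col_mxKu.
  - rewrite E3_mul /fb_block /E3 /trip_mx !mul_mx_row !mulmx0 mulmx1.
    by rewrite fb_rows col_mxKd.
case=> S [R [uS uR /key [E0 E2' E3']]].
set Ru := usubmx R.
have RE : R = fb_block (lsubmx Ru) (lsubmx (rsubmx Ru)) (rsubmx (rsubmx Ru)) S.
  rewrite /fb_block /block_mx -{1}(vsubmxK R) -/Ru.
  rewrite -{1}(hsubmxK Ru) -{1}(hsubmxK (rsubmx Ru)); congr col_mx.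
  rewrite -{1}(vsubmxK (dsubmx R)) -E2_mul -E3_mul -E2' -E3'.
  rewrite /E2 /E3 /trip_mx !mul_mx_row !mulmx0 mulmx1.
  by rewrite rc.
exists (rsubmx (rsubmx Ru)), (lsubmx (rsubmx Ru)), (lsubmx Ru), S.
move: uR; rewrite {1}RE fb_unit => /andP [uP _].
split => //.
by rewrite -mulmxA -RE -E0 mulKmx.
Qed.
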